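(* Let $h>0$, $\delta_1>0$, $\theta_1\in(0,\pi)$, $\lambda_1=\delta_1e^{\mathrm{i}\theta_1/2}$, with $\lambda_1\pm\frac{2\mathrm{i}}{h\lambda_1}\neq0$, and let $\alpha_1,\beta_1\in\mathbb{C}\setminus\{0\}$. Define $$E_n(t)=\left(\frac{2-\mathrm{i}h\delta_1^2e^{\mathrm{i}\theta_1}}{2+\mathrm{i}h\delta_1^2e^{\mathrm{i}\theta_1}}\right)^{n}\exp\!\left(\frac{\mathrm{i}}{2}\Big(\delta_1^2+\frac{1}{\delta_1^2}\Big)\cos\theta_1\, t-\frac12\Big(\delta_1^2-\frac{1}{\delta_1^2}\Big)\sin\theta_1\, t\right)$$ and $$U_n=-\frac{4\mathrm{i}\delta_1\alpha_1\bar\beta_1\sin\theta_1e^{\mathrm{i}\theta_1/2}}{|\beta_1|^2(2+\mathrm{i}h\delta_1^2e^{\mathrm{i}\theta_1})E_n^{-1}+|\alpha_1|^2(2e^{\mathrm{i}\theta_1}+\mathrm{i}h\delta_1^2)\bar E_n},$$ $$R_n=-\frac{2\mathrm{i}\delta_1\alpha_1\bar\beta_1\sin\theta_1e^{\mathrm{i}\theta_1/2}}{|\beta_1|^2E_n^{-1}+|\alpha_1|^2\bar E_ne^{\mathrm{i}\theta_1}},\qquad Q_n=-\frac{2\mathrm{i}\alpha_1\bar\beta_1\sin\theta_1e^{\mathrm{i}\theta_1/2}}{\delta_1\big(|\beta_1|^2E_n^{-1}e^{\mathrm{i}\theta_1}+|\alpha_1|^2\bar E_n\big)}.$$ Then $(U_n,R_n,Q_n)$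 is a solution of the semi-discrete MTM system (at all $(n,t)$ where the denominators are nonzero).
   Context: Fix $h>0$. The semi-discrete MTM system for complex-valued differentiable functions $U_n(t),R_n(t),Q_n(t)$, $n\in\mathbb{Z}$, is $$4\mathrm{i}\frac{dU_n}{dt}+Q_{n+1}+Q_n+\frac{2\mathrm{i}}{h}(R_{n+1}-R_n)+U_n^2(\bar R_n+\bar R_{n+1})-U_n(|Q_{n+1}|^2+|Q_n|^2+|R_{n+1}|^2+|R_n|^2)-\frac{\mathrm{i}h}{2}U_n^2(\bar Q_{n+1}-\bar Q_n)=0,$$ $$-\frac{2\mathrm{i}}{h}(Q_{n+1}-Q_n)+2U_n-|U_n|^2(Q_{n+1}+Q_n)=0,\qquad R_{n+1}+R_n-2U_n+\frac{\mathrm{i}h}{2}|U_n|^2(R_{n+1}-R_n)=0.$$ *)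

(* Defs.v *)
From Stdlib Require Import Reals ZArith.
Open Scope R_scope.

Record Cplx : Type := mkC { Re : R ; Im : R }.

Definition RtoC (x : R) : Cplx := mkC x 0.
Definition Ci : Cplx := mkC 0 1.
Definition Cadd (z w : Cplx) : Cplx := mkC (Re z + Re w) (Im z + Im w).
Definition Copp (z : Cplx) : Cplx := mkC (- Re z) (- Im z).
Definition Csub (z w : Cplx) : Cplx := Cadd z (Copp w).
Definition Cmul (z w : Cplx) : Cplx :=
  mkC (Re z * Re w - Im z * Im w) (Re z * Im w + Im z * Re w).
Definition Cinv (z : Cplx) : Cplx :=
  mkC (Re z / (Re z * Re z + Im z * Im z)) (- Im z / (Re z * Re z + Im z * Im z)).
Definition Cdiv (z w : Cplx) : Cplx := Cmul z (Cinv w).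
Definition Cconj (z : Cplx) : Cplx := mkC (Re z) (- Im z).
Definition Cnorm2 (z : Cplx) : Cplx := RtoC (Re z * Re z + Im z * Im z).
Definition Cexp (z : Cplx) : Cplx := mkC (exp (Re z) * cos (Im z)) (exp (Re z) * sin (Im z)).

Fixpoint Cpow (z : Cplx) (k : nat) : Cplx :=
  match k with O => RtoC 1 | S k' => Cmul z (Cpow z k') end.
Definition Cpowz (z : Cplx) (n : Z) : Cplx :=
  if (0 <=? n)%Z then Cpow z (Z.to_nat n) else Cinv (Cpow z (Z.to_nat (- n))).

Declare Scope C_scope.
Delimit Scope C_scope with C.
Infix "+" := Cadd : C_scope.
Infix "-" := Csub : C_scope.
Infix "*" := Cmul : C_scope.
Infix "/" := Cdiv : C_scope.
Notation "- z" := (Copp z) : C_scope.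

Definition Cderiv_at (f : R -> Cplx) (t : R) (z : Cplx) : Prop :=
  derivable_pt_lim (fun s => Re (f s)) t (Re z) /\
  derivable_pt_lim (fun s => Im (f s)) t (Im z).

Definition sdMTM_at (h : R) (U Rr Q : Z -> R -> Cplx) (n : Z) (t : R) : Prop :=
  let Un := U n t in
  let Rn := Rr n t in let Rn1 := Rr (n + 1)%Z t in
  let Qn := Q n t in let Qn1 := Q (n + 1)%Z t in
  (exists D : Cplx, Cderiv_at (U n) t D /\
     (RtoC 4 * Ci * D + Qn1 + Qn + (RtoC 2 * Ci / RtoC h) * (Rn1 - Rn)
      + Un * Un * (Cconj Rn + Cconj Rn1)
      - Un * (Cnorm2 Qn1 + Cnorm2 Qn + Cnorm2 Rn1 + Cnorm2 Rn)
      - (Ci * RtoC h / RtoC 2) * Un * Un * (Cconj Qn1 - Cconj Qn))%C = RtoC 0)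
  /\ (- (RtoC 2 * Ci / RtoC h) * (Qn1 - Qn) + RtoC 2 * Un
      - Cnorm2 Un * (Qn1 + Qn))%C = RtoC 0
  /\ (Rn1 + Rn - RtoC 2 * Un + (Ci * RtoC h / RtoC 2) * Cnorm2 Un * (Rn1 - Rn))%C
      = RtoC 0.

Section Sol.
Variables (h d th : R) (a b : Cplx).
Local Open Scope C_scope.

Definition eith : Cplx := Cexp (Ci * RtoC th).
Definition eith2 : Cplx := Cexp (Ci * RtoC (th / 2)).
Definition lam1 : Cplx := RtoC d * eith2.
Definition d2 : Cplx := RtoC (d * d).

Definition Esol (n : Z) (t : R) : Cplx :=
  Cpowz ((RtoC 2 - Ci * RtoC h * d2 * eith) / (RtoC 2 + Ci * RtoC h * d2 * eith)) n
  * Cexp ((Ci / RtoC 2) * (RtoC (d * d + 1 / (d * d))) * RtoC (cos th) * RtoC t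
          - (RtoC 1 / RtoC 2) * RtoC (d * d - 1 / (d * d)) * RtoC (sin th) * RtoC t).

Definition Uden (n : Z) (t : R) : Cplx :=
  Cnorm2 b * (RtoC 2 + Ci * RtoC h * d2 * eith) * Cinv (Esol n t)
  + Cnorm2 a * (RtoC 2 * eith + Ci * RtoC h * d2) * Cconj (Esol n t).
Definition Usol (n : Z) (t : R) : Cplx :=
  - (RtoC 4 * Ci * RtoC d * a * Cconj b * RtoC (sin th) * eith2) / Uden n t.

Definition Rden (n : Z) (t : R) : Cplx :=
  Cnorm2 b * Cinv (Esol n t) + Cnorm2 a * Cconj (Esol n t) * eith.
Definition Rsol (n : Z) (t : R) : Cplx :=
  - (RtoC 2 * Ci * RtoC d * a * Cconj b * RtoC (sin th) * eith2) / Rden n t.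

Definition Qden (n : Z) (t : R) : Cplx :=
  RtoC d * (Cnorm2 b * Cinv (Esol n t) * eith + Cnorm2 a * Cconj (Esol n t)).
Definition Qsol (n : Z) (t : R) : Cplx :=
  - (RtoC 2 * Ci * a * Cconj b * RtoC (sin th) * eith2) / Qden n t.
End Sol.

(* Main.v *)
Require Import Defs.
From Stdlib Require Import Reals ZArith Lra Lia Field FunctionalExtensionality.
Open Scope R_scope.

Lemma Ceq (z w : Cplx) : Re z = Re w -> Im z = Im w -> z = w.
Proof. destruct z, w; simpl; intros -> ->; reflexivity. Qed.

Ltac ceq := apply Ceq; simpl.

Lemma C_ring : ring_theory (RtoC 0) (RtoC 1) Cadd Cmul Csub Copp (@eq Cplx).
Proof.
constructor; intros; ceq; ring.
Qed.

Lemma Cnz_norm (z : Cplx) : z <> RtoC 0 -> Re z * Re z + Im z * Im z <> 0.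
Proof.
intros H H0; apply H; destruct z as [x y]; simpl in *.
assert (x = 0) by nra. assert (y = 0) by nra. subst; reflexivity.
Qed.

Lemma C_field : field_theory (RtoC 0) (RtoC 1) Cadd Cmul Csub Copp Cdiv Cinv (@eq Cplx).
Proof.
constructor.
- exact C_ring.
- intro H. injection H. lra.
- reflexivity.
- intros z Hz. pose proof (Cnz_norm z Hz). ceq; field; auto.
Qed.

Add Field Cfield : C_field.

Local Open Scope C_scope.
Open Scope R_scope.

Lemma dpl_val f t a b : derivable_pt_lim f t a -> a = b -> derivable_pt_lim f t b.
Proof. intros H ->; exact H. Qed.
Lemma dpl_ext f g t a : (forall s, f s = g s) -> derivable_pt_lim f t a -> derivable_pt_lim g t a.
Proof. intros E H. replace g with f; [exact H| apply functional_extensionality; exact E]. Qed.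
Lemma R_mult f g t a b : derivable_pt_lim f t a -> derivable_pt_lim g t b ->
  derivable_pt_lim (fun s => f s * g s) t (a * g t + f t * b).
Proof. intros; exact (derivable_pt_lim_mult f g t a b H H0). Qed.
Lemma R_plus f g t a b : derivable_pt_lim f t a -> derivable_pt_lim g t b ->
  derivable_pt_lim (fun s => f s + g s) t (a + b).
Proof. intros; exact (derivable_pt_lim_plus f g t a b H H0). Qed.
Lemma R_minus f g t a b : derivable_pt_lim f t a -> derivable_pt_lim g t b ->
  derivable_pt_lim (fun s => f s - g s) t (a - b).
Proof. intros; exact (derivable_pt_lim_minus f g t a b H H0). Qed.
Lemma R_opp f t a : derivable_pt_lim f t a -> derivable_pt_lim (fun s => - f s) t (- a).
Proof. intros; exact (derivable_pt_lim_opp f t a H). Qed.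
Lemma R_div f g t a b : derivable_pt_lim f t a -> derivable_pt_lim g t b -> g t <> 0 ->
  derivable_pt_lim (fun s => f s / g s) t ((a * g t - b * f t) / (g t)²).
Proof. intros; exact (derivable_pt_lim_div f g t a b H H0 H1). Qed.
Lemma R_const c t : derivable_pt_lim (fun _ => c) t 0.
Proof. exact (derivable_pt_lim_const c t). Qed.
Lemma R_id t : derivable_pt_lim (fun s => s) t 1.
Proof. exact (derivable_pt_lim_id t). Qed.
Lemma R_exp f t a : derivable_pt_lim f t a -> derivable_pt_lim (fun s => exp (f s)) t (exp (f t) * a).
Proof. intros. exact (derivable_pt_lim_comp f exp t a (exp (f t)) H (derivable_pt_lim_exp (f t))). Qed.
Lemma R_cos f t a : derivable_pt_lim f t a -> derivable_pt_lim (fun s => cos (f s)) t (- sin (f t) * a).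
Proof. intros. exact (derivable_pt_lim_comp f cos t a (- sin (f t)) H (derivable_pt_lim_cos (f t))). Qed.
Lemma R_sin f t a : derivable_pt_lim f t a -> derivable_pt_lim (fun s => sin (f s)) t (cos (f t) * a).
Proof. intros. exact (derivable_pt_lim_comp f sin t a (cos (f t)) H (derivable_pt_lim_sin (f t))). Qed.

Local Open Scope C_scope.
Lemma Cd_val f t u v : Cderiv_at f t u -> u = v -> Cderiv_at f t v.
Proof. intros H ->; exact H. Qed.
Lemma Cd_ext f g t u : (forall s, f s = g s) -> Cderiv_at f t u -> Cderiv_at g t u.
Proof. intros E H. replace g with f; [exact H| apply functional_extensionality; exact E]. Qed.
Lemma Cd_const c t : Cderiv_at (fun _ => c) t (RtoC 0).
Proof. split; simpl; apply R_const. Qed.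
Lemma Cd_id t : Cderiv_at (fun s => RtoC s) t (RtoC 1).
Proof. split; simpl; [apply R_id | apply R_const]. Qed.
Lemma Cd_mul f g t u v : Cderiv_at f t u -> Cderiv_at g t v ->
  Cderiv_at (fun s => f s * g s) t (u * g t + f t * v).
Proof.
intros [H1 H2] [H3 H4]; split; simpl.
- eapply dpl_val. apply R_minus; apply R_mult; eauto. simpl; ring.
- eapply dpl_val. apply R_plus; apply R_mult; eauto. simpl; ring.
Qed.
Lemma Cd_add f g t u v : Cderiv_at f t u -> Cderiv_at g t v ->
  Cderiv_at (fun s => f s + g s) t (u + v).
Proof. intros [H1 H2] [H3 H4]; split; simpl; apply R_plus; auto. Qed.
Lemma Cd_sub f g t u v : Cderiv_at f t u -> Cderiv_at g t v ->
  Cderiv_at (fun s => f s - g s) t (u - v).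
Proof. intros [H1 H2] [H3 H4]; split; simpl; apply R_plus; auto; apply R_opp; auto. Qed.
Lemma Cd_opp f t u : Cderiv_at f t u -> Cderiv_at (fun s => - f s) t (- u).
Proof. intros [H1 H2]; split; simpl; apply R_opp; auto. Qed.
Lemma Cd_conj f t u : Cderiv_at f t u -> Cderiv_at (fun s => Cconj (f s)) t (Cconj u).
Proof. intros [H1 H2]; split; simpl; [auto | apply R_opp; auto]. Qed.
Lemma Cd_exp f t u : Cderiv_at f t u -> Cderiv_at (fun s => Cexp (f s)) t (Cexp (f t) * u).
Proof.
intros [H1 H2]; split; simpl.
- eapply dpl_val. apply R_mult. apply R_exp; eauto. apply R_cos; eauto. simpl; ring.
- eapply dpl_val. apply R_mult. apply R_exp; eauto. apply R_sin; eauto. simpl; ring.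
Qed.
Lemma Cd_inv f t u : Cderiv_at f t u -> f t <> RtoC 0 ->
  Cderiv_at (fun s => Cinv (f s)) t (- u / (f t * f t)).
Proof.
intros [H1 H2] Hnz. unfold Cdiv. pose proof (Cnz_norm _ Hnz) as Hn.
assert (Hd : derivable_pt_lim (fun s => Re (f s) * Re (f s) + Im (f s) * Im (f s))%R t
   (Re u * Re (f t) + Re (f t) * Re u + (Im u * Im (f t) + Im (f t) * Im u))%R).
{ apply R_plus; apply R_mult; auto. }
split; simpl.
- eapply dpl_val. { apply R_div; [exact H1| exact Hd| exact Hn]. }
  cbv beta. destruct (f t) as [x y]; destruct u as [p q]; simpl in *. unfold Rsqr.
  assert (Hm : ((x * x - y * y) * (x * x - y * y) + (x * y + y * x) * (x * y + y * x))%R <> 0).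
  { replace ((x * x - y * y) * (x * x - y * y) + (x * y + y * x) * (x * y + y * x))%R with ((x*x+y*y)*(x*x+y*y))%R by ring.
    apply Rmult_integral_contrapositive; auto. }
  field. auto.
- eapply dpl_val. { apply R_div; [apply R_opp; exact H2| exact Hd| exact Hn]. }
  cbv beta. destruct (f t) as [x y]; destruct u as [p q]; simpl in *. unfold Rsqr.
  assert (Hm : ((x * x - y * y) * (x * x - y * y) + (x * y + y * x) * (x * y + y * x))%R <> 0).
  { replace ((x * x - y * y) * (x * x - y * y) + (x * y + y * x) * (x * y + y * x))%R with ((x*x+y*y)*(x*x+y*y))%R by ring.
    apply Rmult_integral_contrapositive; auto. }
  field. auto.
Qed.
Open Scope R_scope.
Local Open Scope C_scope.
Notation "'c1'" := (RtoC 1).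
Notation two := (c1 + c1).

Lemma conj_mul z w : Cconj (z * w) = Cconj z * Cconj w. Proof. ceq; ring. Qed.
Lemma conj_add z w : Cconj (z + w) = Cconj z + Cconj w. Proof. ceq; ring. Qed.
Lemma conj_sub z w : Cconj (z - w) = Cconj z - Cconj w. Proof. ceq; ring. Qed.
Lemma conj_opp z : Cconj (- z) = - Cconj z. Proof. ceq; ring. Qed.
Lemma conj_inv z : Cconj (Cinv z) = Cinv (Cconj z).
Proof. destruct z as [x y]; ceq; replace (- y * - y)%R with (y * y)%R by ring; unfold Rdiv; ring. Qed.
Lemma conj_div z w : Cconj (z / w) = Cconj z / Cconj w. Proof. unfold Cdiv. rewrite conj_mul, conj_inv. reflexivity. Qed.
Lemma conj_R x : Cconj (RtoC x) = RtoC x. Proof. ceq; ring. Qed.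
Lemma conj_i : Cconj Ci = - Ci. Proof. ceq; ring. Qed.
Lemma conj_conj z : Cconj (Cconj z) = z. Proof. destruct z; ceq; ring. Qed.
Lemma norm2E z : Cnorm2 z = z * Cconj z. Proof. ceq; ring. Qed.
Lemma RtoC_mul x y : RtoC (x * y) = RtoC x * RtoC y. Proof. ceq; ring. Qed.
Lemma RtoC_add x y : RtoC (x + y) = RtoC x + RtoC y. Proof. ceq; ring. Qed.
Lemma RtoC_sub x y : RtoC (x - y) = RtoC x - RtoC y. Proof. ceq; ring. Qed.
Lemma RtoC_div x y : y <> 0%R -> RtoC (x / y) = RtoC x / RtoC y.
Proof. intro. ceq; field; auto. Qed.
Lemma RtoC_2 : RtoC 2 = two. Proof. ceq; ring. Qed.
Lemma RtoC_4 : RtoC 4 = two * two. Proof. ceq; ring. Qed.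
Lemma RtoC_nz x : x <> 0%R -> RtoC x <> RtoC 0.
Proof. intros H E; injection E; auto. Qed.
Lemma Ci_nz : Ci <> RtoC 0. Proof. intro E; injection E; lra. Qed.
Lemma two_nz : two <> RtoC 0. Proof. intro E; injection E; lra. Qed.
Lemma Ci_inv : Ci = - c1 / Ci. Proof. ceq; field. Qed.
Lemma conj_nz z : z <> RtoC 0 -> Cconj z <> RtoC 0.
Proof. intros H E; apply H. rewrite <- (conj_conj z), E. ceq; ring. Qed.
Lemma mul_nz z w : z <> RtoC 0 -> w <> RtoC 0 -> z * w <> RtoC 0.
Proof. intros Hz Hw E. apply Hw. transitivity (Cinv z * (z * w)). field; auto. rewrite E. ring. Qed.
Lemma inv_nz z : z <> RtoC 0 -> Cinv z <> RtoC 0.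
Proof. intros Hz E. apply Hz. transitivity (z * z * Cinv z). field; auto. rewrite E. ring. Qed.

Lemma eith2_eq th : eith2 th = mkC (cos (th/2)) (sin (th/2)).
Proof. unfold eith2, Cexp; ceq;
  replace (0 * (th / 2) - 1 * 0)%R with 0%R by ring; rewrite exp_0;
  replace (0 * 0 + 1 * (th / 2))%R with (th/2)%R by ring; ring. Qed.
Lemma eith_eq th : eith th = mkC (cos th) (sin th).
Proof. unfold eith, Cexp; ceq;
  replace (0 * th - 1 * 0)%R with 0%R by ring; rewrite exp_0;
  replace (0 * 0 + 1 * th)%R with th by ring; ring. Qed.
Lemma eith_sq th : eith th = eith2 th * eith2 th.
Proof. rewrite eith_eq, eith2_eq. replace th with (2 * (th/2))%R at 1 2 by field.
  rewrite cos_2a, sin_2a. ceq; ring. Qed.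
Lemma eith2_nz th : eith2 th <> RtoC 0.
Proof. rewrite eith2_eq. intro E. injection E. intros. pose proof (sin2_cos2 (th/2)).
  unfold Rsqr in *. nra. Qed.
Lemma conj_w th : Cconj (eith2 th) = c1 / eith2 th.
Proof. rewrite eith2_eq. pose proof (sin2_cos2 (th/2)). unfold Rsqr in *.
  ceq; replace (cos (th / 2) * cos (th / 2) + sin (th / 2) * sin (th / 2))%R with 1%R by lra; field. Qed.
Lemma sinE th : RtoC (sin th) =
  ((eith2 th * eith2 th - c1 / eith2 th * (c1 / eith2 th)) / two) / Ci.
Proof. rewrite <- !conj_w, <- conj_mul, <- eith_sq, eith_eq. ceq; field. Qed.
Lemma cosE th : RtoC (cos th) =
  (eith2 th * eith2 th + c1 / eith2 th * (c1 / eith2 th)) / two.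
Proof. rewrite <- !conj_w, <- conj_mul, <- eith_sq, eith_eq. ceq; field. Qed.

Lemma Cpow_nz z k : z <> RtoC 0 -> Cpow z k <> RtoC 0.
Proof. intro Hz. induction k; simpl. intro E; injection E; lra. apply mul_nz; auto. Qed.
Lemma Cpowz_nz z n : z <> RtoC 0 -> Cpowz z n <> RtoC 0.
Proof. intro Hz. unfold Cpowz. destruct (0 <=? n)%Z. apply Cpow_nz; auto. apply inv_nz, Cpow_nz; auto. Qed.
Lemma Cpowz_S z n : z <> RtoC 0 -> Cpowz z (n + 1) = z * Cpowz z n.
Proof.
intro Hz. unfold Cpowz.
destruct (Z.leb_spec 0 n) as [Hn|Hn].
- destruct (Z.leb_spec 0 (n+1)) as [Hn1|Hn1]; [|lia].
  replace (Z.to_nat (n+1)) with (S (Z.to_nat n)) by lia. reflexivity.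
- destruct (Z.leb_spec 0 (n+1)) as [Hn1|Hn1].
  + assert (n = -1)%Z by lia. subst. simpl. field. exact Hz.
  + replace (Z.to_nat (- n)) with (S (Z.to_nat (- (n+1)))) by lia. simpl.
    field. split; [apply Cpow_nz; exact Hz | exact Hz].
Qed.
Open Scope R_scope.
Local Open Scope C_scope.

Lemma opp_nz z : z <> RtoC 0 -> - z <> RtoC 0.
Proof. intros H E; apply H. transitivity (- - z). ring. rewrite E. ceq; ring. Qed.
Ltac nz := repeat first [ assumption | split | apply mul_nz | apply opp_nz | apply inv_nz | apply Ci_nz
  | apply eith2_nz | apply two_nz | (apply RtoC_nz; lra) | assumption ].

Lemma Cd_div f g t u v : Cderiv_at f t u -> Cderiv_at g t v -> g t <> RtoC 0 ->
  Cderiv_at (fun s => f s / g s) t ((u * g t - f t * v) / (g t * g t)).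
Proof. intros Hf Hg Hz. unfold Cdiv.
  eapply Cd_val. apply Cd_mul; [exact Hf | apply Cd_inv; [exact Hg| exact Hz]].
  cbv beta. field. exact Hz. Qed.

Definition G0 (d th : R) : Cplx :=
  (Ci / RtoC 2) * RtoC (d * d + 1 / (d * d)) * RtoC (cos th)
  - (RtoC 1 / RtoC 2) * RtoC (d * d - 1 / (d * d)) * RtoC (sin th).

Lemma dE h d th n t : Cderiv_at (Esol h d th n) t (Esol h d th n t * G0 d th).
Proof.
unfold Esol. eapply Cd_val.
- apply Cd_mul. apply Cd_const. apply Cd_exp. apply Cd_sub; apply Cd_mul; (apply Cd_const || apply Cd_id).
- unfold G0. ring.
Qed.

Lemma Cexp_nz z : Cexp z <> RtoC 0.
Proof. unfold Cexp. intro E. injection E. intros H1 H2. pose proof (exp_pos (Re z)).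
  pose proof (sin2_cos2 (Im z)). unfold Rsqr in *.
  apply Rmult_integral in H1; apply Rmult_integral in H2. destruct H1, H2; nra. Qed.

Definition rr h d th := (RtoC 2 - Ci * RtoC h * Defs.d2 d * eith th) / (RtoC 2 + Ci * RtoC h * Defs.d2 d * eith th).

Lemma Esol_S h d th n t : rr h d th <> RtoC 0 -> Esol h d th (n + 1) t = rr h d th * Esol h d th n t.
Proof. intro Hr. unfold Esol. fold (rr h d th). rewrite Cpowz_S by exact Hr. ring. Qed.

Lemma Esol_nz h d th n t : rr h d th <> RtoC 0 -> Esol h d th n t <> RtoC 0.
Proof. intro Hr. unfold Esol. fold (rr h d th). apply mul_nz. apply Cpowz_nz; auto. apply Cexp_nz. Qed.

Lemma Np_nz h d th : 0 < h -> 0 < d ->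
  (lam1 d th + Ci * RtoC 2 / (RtoC h * lam1 d th)) <> RtoC 0 ->
  RtoC 2 - Ci * RtoC h * Defs.d2 d * eith th <> RtoC 0.
Proof.
intros Hh Hd Hl E. apply Hl.
assert (Hx: Ci * RtoC 2 = (- c1 / Ci) * RtoC 2) by (rewrite <- Ci_inv; reflexivity).
rewrite Hx. transitivity ((RtoC 2 - Ci * RtoC h * Defs.d2 d * eith th) / (- Ci * RtoC h * lam1 d th)).
- unfold lam1, Defs.d2. rewrite eith_sq, RtoC_mul. field.
  nz.
- rewrite E. field. unfold lam1.
  nz.
Qed.
Lemma Dp_nz h d th : 0 < h -> 0 < d ->
  (lam1 d th - Ci * RtoC 2 / (RtoC h * lam1 d th)) <> RtoC 0 ->
  RtoC 2 + Ci * RtoC h * Defs.d2 d * eith th <> RtoC 0.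
Proof.
intros Hh Hd Hl E. apply Hl.
assert (Hx: Ci * RtoC 2 = (- c1 / Ci) * RtoC 2) by (rewrite <- Ci_inv; reflexivity).
rewrite Hx. transitivity (- (RtoC 2 + Ci * RtoC h * Defs.d2 d * eith th) / (- Ci * RtoC h * lam1 d th)).
- unfold lam1, Defs.d2. rewrite eith_sq, RtoC_mul. field.
  nz.
- rewrite E. field. unfold lam1.
  nz.
Qed.

Hint Rewrite conj_mul conj_add conj_sub conj_opp conj_div conj_inv conj_R conj_i conj_conj conj_w : cconj.

Lemma nz_eq x c y : x <> RtoC 0 -> c <> RtoC 0 -> y = x * c -> y <> RtoC 0.
Proof. intros Hx Hc ->. apply mul_nz; auto. Qed.

Ltac fixc := try change (mkC (R1 + R1) (R0 + R0)) with (RtoC 1 + RtoC 1);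
             try change (mkC R1 R0) with (RtoC 1).

Ltac prep h d th n t Hr :=
  unfold Usol, Uden, Rsol, Rden, Qsol, Qden; rewrite ?(Esol_S h d th n t Hr);
  unfold rr, Defs.d2; rewrite ?norm2E, ?eith_sq; autorewrite with cconj;
  rewrite ?RtoC_mul, ?RtoC_2, ?RtoC_4.

Ltac closeby h d th n t Hr X c :=
  apply (nz_eq X c); [assumption | nz | prep h d th n t Hr; fixc; field; nz].

Ltac closeall h d th a b n t Hr :=
  let W := constr:(eith2 th * eith2 th) in
  let HD := constr:(Ci * RtoC h * (RtoC d * RtoC d)) in
  let E := constr:(Esol h d th n t) in
  let c5 := constr:((two - HD * W) * E * (two * W - HD)) in
  first [ closeby h d th n t Hr (Rden h d th a b n t) E
        | closeby h d th n t Hr (Uden h d th a b n t) E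
        | closeby h d th n t Hr (Qden h d th a b n t) (E / RtoC d)
        | closeby h d th n t Hr (Rden h d th a b (n+1) t) c5
        | closeby h d th n t Hr (Qden h d th a b (n+1) t) (c5 / RtoC d)
        | closeby h d th n t Hr (Cconj (Uden h d th a b n t)) (W * Cconj E)
        | closeby h d th n t Hr (two + HD * W) (RtoC 1)
        | closeby h d th n t Hr (two - HD * W) (RtoC 1)
        | closeby h d th n t Hr (two * W - HD) (RtoC 1)
        | closeby h d th n t Hr (two * W + HD) (RtoC 1) ].

Ltac finish_nz h d th a b n t Hr :=
    repeat match goal with |- _ /\ _ => split end;
    fixc; try solve [nz];
    try closeall h d th a b n t Hr;
    try (apply (nz_eq (two * (eith2 th * eith2 th) - Ci * RtoC h * (RtoC d * RtoC d)) (RtoC 1)); [assumption | nz | ceq; ring]);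
    try (apply (nz_eq (two * (eith2 th * eith2 th) + Ci * RtoC h * (RtoC d * RtoC d)) (RtoC 1)); [assumption | nz | ceq; ring]).

Lemma LCi2h h : RtoC 2 * Ci / RtoC h = RtoC 2 * (- c1 / Ci) / RtoC h.
Proof. rewrite <- Ci_inv. reflexivity. Qed.
Lemma LCi2 : Ci / RtoC 2 = (- c1 / Ci) / RtoC 2.
Proof. rewrite <- Ci_inv. reflexivity. Qed.

Theorem mainTheorem6 (h d th : R) (a b : Cplx) :
  0 < h -> 0 < d -> 0 < th < PI ->
  (lam1 d th + Ci * RtoC 2 / (RtoC h * lam1 d th))%C <> RtoC 0 ->
  (lam1 d th - Ci * RtoC 2 / (RtoC h * lam1 d th))%C <> RtoC 0 ->
  a <> RtoC 0 -> b <> RtoC 0 ->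
  forall (n : Z) (t : R),
    Uden h d th a b n t <> RtoC 0 ->
    Rden h d th a b n t <> RtoC 0 -> Rden h d th a b (n + 1)%Z t <> RtoC 0 ->
    Qden h d th a b n t <> RtoC 0 -> Qden h d th a b (n + 1)%Z t <> RtoC 0 ->
    sdMTM_at h (Usol h d th a b) (Rsol h d th a b) (Qsol h d th a b) n t.
Proof.
intros Hh Hd Hth Hl1 Hl2 Ha Hb n t HU HR HR1 HQ HQ1.
pose proof (Np_nz h d th Hh Hd Hl1) as HNp.
pose proof (Dp_nz h d th Hh Hd Hl2) as HDp.
assert (Hr : rr h d th <> RtoC 0) by (unfold rr, Cdiv; nz).
pose proof (Esol_nz h d th n t Hr) as HE.
assert (Hdd : (d * d)%R <> 0%R) by nra.
pose proof (conj_nz _ HE) as HF. pose proof (conj_nz _ HU) as HUc.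
assert (HDpw : two * (eith2 th * eith2 th) - Ci * RtoC h * (RtoC d * RtoC d) <> RtoC 0).
{ apply (nz_eq (Cconj (RtoC 2 + Ci * RtoC h * Defs.d2 d * eith th)) (eith2 th * eith2 th)).
  apply conj_nz; exact HDp. nz. prep h d th n t Hr. field. nz. }
assert (HNpw : two * (eith2 th * eith2 th) + Ci * RtoC h * (RtoC d * RtoC d) <> RtoC 0).
{ apply (nz_eq (Cconj (RtoC 2 - Ci * RtoC h * Defs.d2 d * eith th)) (eith2 th * eith2 th)).
  apply conj_nz; exact HNp. nz. prep h d th n t Hr. field. nz. }
assert (HNp' : two - Ci * RtoC h * (RtoC d * RtoC d) * (eith2 th * eith2 th) <> RtoC 0).
{ revert HNp. unfold Defs.d2. rewrite RtoC_mul, RtoC_2, eith_sq. auto. }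
assert (HDp' : two + Ci * RtoC h * (RtoC d * RtoC d) * (eith2 th * eith2 th) <> RtoC 0).
{ revert HDp. unfold Defs.d2. rewrite RtoC_mul, RtoC_2, eith_sq. auto. }
unfold sdMTM_at; cbv zeta.
split; [|split].
- eexists; split.
  + unfold Usol. apply Cd_div. apply Cd_const. unfold Uden.
    apply Cd_add; apply Cd_mul; try apply Cd_const.
    apply Cd_inv; [apply dE | exact HE]. apply Cd_conj, dE. exact HU.
  + cbv beta. unfold G0. rewrite LCi2.
    unfold Usol, Uden, Rsol, Rden, Qsol, Qden.
    rewrite !(Esol_S h d th (n)%Z t Hr).
    unfold rr, Defs.d2.
    rewrite ?norm2E, ?eith_sq.
    autorewrite with cconj.
    try rewrite LCi2h.
    rewrite ?sinE, ?cosE, ?eith_sq, ?RtoC_add, ?RtoC_sub, ?RtoC_div by exact Hdd.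
    rewrite ?RtoC_mul, ?RtoC_2, ?RtoC_4.
    field; finish_nz h d th a b n t Hr.
- unfold Usol, Uden, Rsol, Rden, Qsol, Qden.
  rewrite !(Esol_S h d th (n)%Z t Hr).
  unfold rr, Defs.d2.
  rewrite ?norm2E, ?eith_sq.
  autorewrite with cconj.
  try rewrite LCi2h.
  rewrite ?sinE, ?cosE, ?eith_sq, ?RtoC_add, ?RtoC_sub, ?RtoC_div by exact Hdd.
  rewrite ?RtoC_mul, ?RtoC_2, ?RtoC_4.
  field; finish_nz h d th a b n t Hr.
- unfold Usol, Uden, Rsol, Rden, Qsol, Qden.
  rewrite !(Esol_S h d th (n)%Z t Hr).
  unfold rr, Defs.d2.
  rewrite ?norm2E, ?eith_sq.
  autorewrite with cconj.
  try rewrite LCi2h.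
  rewrite ?sinE, ?cosE, ?eith_sq, ?RtoC_add, ?RtoC_sub, ?RtoC_div by exact Hdd.
  rewrite ?RtoC_mul, ?RtoC_2, ?RtoC_4.
  field; finish_nz h d th a b n t Hr.
Qed.
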